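(* Let $n\ge3$ be an odd integer. For $1\le r\le n-1$ let $S^r_n=\{(k,a,b)\in(\mathbb{R}\setminus A_n)\times\mathbb{R}\times\mathbb{R}: k\neq0,\ \mathrm{rank}(A^{(k,a,b)}_n)\le r,\ 4a^3+27b^2=0\}\setminus\{(k,0,0):k\in\mathbb{R}\}$. Then (a) $S^{n-1}_n=\{(k,a^{(n)}_{k,1},b^{(n)}_{k,1}): k\in\mathbb{R}\setminus A_n\}$; (b) the matrix $A^{(k,a,b)}_n$ has rank exactly $n-1$ for all but finitely many triples $(k,a,b)\in S^{n-1}_n$; (c) for each $1\le r\le n-2$, the matrix $A^{(k,a,b)}_n$ has rank $r$ for only finitely many triples $(k,a,b)\in S^{n-1}_n$.
   Context: For real $k,a,b$, the generalized $k$-FL sequence is $S^{(a,b)}_{k,0}=2b$, $S^{(a,b)}_{k,1}=bk+a$, $S^{(a,b)}_{k,m}=kS^{(a,b)}_{k,m-1}+S^{(a,b)}_{k,m-2}$. $A^{(k,a,b)}_n$ is the $n\times n$ skew circulant matrix whose $(i,j)$ entry is $S^{(a,b)}_{k,j-i+1}$ if $j\ge i$ and $-S^{(a,b)}_{k,n+j-i+1}$ if $j<i$. Define $f_m,g_m\in\mathbb{Z}[T]$ by $f_0=0,f_1=1,g_0=2,g_1=T$, $f_m=Tf_{m-1}+f_{m-2}$, $g_m=Tg_{m-1}+g_{m-2}$; $F_n=f_{n+1}-f_n$, $G_n=g_{n+1}-g_n$; $A_n=\{k\in\mathbb{R}: F_n(k)+1=0\text{ or }G_n(k)+k-2=0\}$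 (for odd $n$, $0\in A_n$). For $k\notin A_n$, the singular $k$-FL pair of level $n$ of Type 1 is $a^{(n)}_{k,1}=-\frac{27(F_n(k)+1)^2}{4(G_n(k)+k-2)^2}$, $b^{(n)}_{k,1}=\frac{27(F_n(k)+1)^3}{4(G_n(k)+k-2)^3}$. The condition $4a^3+27b^2=0$ means the curve $y^2=x^3+ax+b$ is singular. *)

(* Defs.v *)
From HB Require Import structures.
From mathcomp Require Import all_boot all_order all_algebra.
From mathcomp Require Import reals.
Set Implicit Arguments. Unset Strict Implicit. Unset Printing Implicit Defensive.
Import Order.TTheory GRing.Theory Num.Theory.
Local Open Scope ring_scope.

Fixpoint FLpair {R : ringType} (k a b : R) (m : nat) : R * R :=
  match m with
  | 0 => (2 * b, b * k + a)
  | m'.+1 => let p := FLpair k a b m' in (p.2, k * p.2 + p.1)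
  end.
Definition FLseq {R : ringType} (k a b : R) (m : nat) : R := (FLpair k a b m).1.

(* the n x n skew circulant matrix A_n^{(k,a,b)} (0-based indices; j-i+1 unchanged) *)
Definition FLmx {R : ringType} (n : nat) (k a b : R) : 'M[R]_n :=
  \matrix_(i < n, j < n)
    (if (i <= j)%N then FLseq k a b (j - i).+1
     else - FLseq k a b (n + j - i).+1).

Fixpoint fgpair (m : nat) : ({poly int} * {poly int}) * ({poly int} * {poly int}) :=
  (* ((f_m, f_{m+1}), (g_m, g_{m+1})) *)
  match m with
  | 0 => ((0, 1), (2%:P, 'X))
  | m'.+1 => let p := fgpair m' in
      ((p.1.2, 'X * p.1.2 + p.1.1), (p.2.2, 'X * p.2.2 + p.2.1))
  end.
Definition fpoly (m : nat) : {poly int} := (fgpair m).1.1.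
Definition gpoly (m : nat) : {poly int} := (fgpair m).2.1.
Definition Fpoly (n : nat) : {poly int} := fpoly n.+1 - fpoly n.
Definition Gpoly (n : nat) : {poly int} := gpoly n.+1 - gpoly n.

Definition evalZ {R : ringType} (p : {poly int}) (x : R) : R :=
  (map_poly intr p).[x].

Definition inA {R : ringType} (n : nat) (k : R) : bool :=
  (evalZ (Fpoly n) k + 1 == 0) || (evalZ (Gpoly n) k + k - 2 == 0).

Definition aT1 {R : fieldType} (n : nat) (k : R) : R :=
  - (27 * (evalZ (Fpoly n) k + 1) ^+ 2) / (4 * (evalZ (Gpoly n) k + k - 2) ^+ 2).
Definition bT1 {R : fieldType} (n : nat) (k : R) : R :=
  (27 * (evalZ (Fpoly n) k + 1) ^+ 3) / (4 * (evalZ (Gpoly n) k + k - 2) ^+ 3).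

Definition inS {R : fieldType} (n r : nat) (k a b : R) : Prop :=
  [/\ ~~ inA n k, k != 0, (\rank (FLmx n k a b) <= r)%N,
      4 * a ^+ 3 + 27 * b ^+ 2 = 0 & ~ (a = 0 /\ b = 0)].

(* Main.v *)
Require Import Defs.
From HB Require Import structures.
From mathcomp Require Import all_boot all_order all_algebra.
From mathcomp Require Import reals.
From mathcomp Require Import zify ring lra.
From Stdlib Require Import Classical_Prop.
Import Order.TTheory GRing.Theory Num.Theory.
Local Open Scope ring_scope.


Definition Jm (R : pzRingType) (p : nat) : 'M[R]_p.+1 :=
  \matrix_(i, j) (if (j == i.+1 :> nat) then 1
                  else if (i == p :> nat) && (j == 0 :> nat) then -1 else 0).

Lemma shift_col (R : pzRingType) (m p : nat) (X : 'M[R]_(m, p.+1)) i (j : 'I_p.+1) :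
  (X *m Jm R p) i j = if (j == 0 :> nat) then - X i ord_max else X i (inord j.-1).
Proof.
rewrite mxE; case: ifP => Hj.
- rewrite (bigD1 ord_max) //= big1 ?addr0.
    by rewrite mxE (eqP Hj) /= eqxx mulrN1.
  move=> l Hl; rewrite mxE (eqP Hj) /=.
  have -> : (l == p :> nat) = false.
    by apply/negbTE; apply: contra Hl => /eqP H; apply/eqP/val_inj.
  by rewrite andFb mulr0.
- have Hj1 : (j.-1 < p.+1)%N by case: j Hj => [[|j] Hj] //= _; lia.
  rewrite (bigD1 (inord j.-1)) //= big1 ?addr0.
    rewrite mxE inordK // .
    have -> : (j == j.-1.+1 :> nat) by move: Hj; case: (nat_of_ord j).
    by rewrite mulr1.
  move=> l Hl; rewrite mxE.
  have -> : (j == l.+1 :> nat) = false.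
    apply/negbTE; apply: contra Hl => /eqP H; apply/eqP/val_inj.
    by rewrite /= inordK // H.
  by rewrite Hj andbF mulr0.
Qed.

Lemma shift_row (R : pzRingType) (m p : nat) (X : 'M[R]_(p.+1, m)) (i : 'I_p.+1) j :
  (Jm R p *m X) i j = if (i == p :> nat) then - X ord0 j else X (inord i.+1) j.
Proof.
rewrite mxE; case: ifP => Hi.
- rewrite (bigD1 ord0) //= big1 ?addr0.
    by rewrite mxE /= Hi /= mulN1r.
  move=> l Hl; rewrite mxE.
  have -> : (l == i.+1 :> nat) = false by apply/negbTE; rewrite (eqP Hi); have := ltn_ord l; lia.
  have -> : (l == 0 :> nat) = false by apply/negbTE; apply: contra Hl => /eqP H; apply/eqP/val_inj.
  by rewrite andbF mul0r.
- have Hi1 : (i.+1 < p.+1)%N by have := ltn_ord i; move/negbT: Hi; lia.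
  rewrite (bigD1 (inord i.+1)) //= big1 ?addr0.
    by rewrite mxE inordK // eqxx mul1r.
  move=> l Hl; rewrite mxE.
  have -> : (l == i.+1 :> nat) = false.
    apply/negbTE; apply: contra Hl => /eqP H; apply/eqP/val_inj.
    by rewrite /= inordK // H.
  by rewrite Hi mul0r.
Qed.


Lemma FLmxE (R : nzRingType) p (k a b : R) (i j : 'I_p.+1) :
  FLmx p.+1 k a b i j = if (i <= j)%N then FLseq k a b (j - i).+1
                        else - FLseq k a b (p.+1 + j - i).+1.
Proof. by rewrite mxE. Qed.

Ltac leaf := first [ reflexivity | congr (- FLseq _ _ _ _); lia | congr (FLseq _ _ _ _); lia | lia ].

Lemma FLmx_comm (R : nzRingType) p (k a b : R) :
  FLmx p.+1 k a b *m Jm R p = Jm R p *m FLmx p.+1 k a b.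
Proof.
apply/matrixP => i j; rewrite shift_col shift_row !FLmxE.
case: j => [[|j] Hj] /=; case: i => [i Hi] /=;
 (case: (eqVneq i p) => [Hip|Hip]; [subst i | rewrite (@inordK p i.+1); last lia]);
 rewrite /= ?inordK /=; try lia;
 repeat case: ifP => /=; move=> *; try leaf.

Qed.

Lemma FLseqSS (R : nzRingType) (k a b : R) m :
  FLseq k a b m.+2 = k * FLseq k a b m.+1 + FLseq k a b m.
Proof. by []. Qed.

Lemma FLmx_B (R : comNzRingType) p (k a b : R) : (0 < p)%N ->
  let A := FLmx p.+1 k a b in
  A - k *: (A *m Jm R p) - (A *m Jm R p) *m Jm R p =
  (FLseq k a b 1 + FLseq k a b p.+2)%:M + (FLseq k a b 0 + FLseq k a b p.+1) *: Jm R p.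
Proof.
move=> p0 A; apply/matrixP => i j.
move: (@shift_col _ _ _ (A *m Jm R p)) => HAJJ.
move: (A *m Jm R p) (@shift_col _ _ _ A) HAJJ => AJ HAJ HAJJ.
move: (AJ *m Jm R p) HAJJ => AJJ HAJJ.
rewrite !mxE HAJJ !HAJ !FLmxE -[i == j]/(nat_of_ord i == nat_of_ord j).
case: j => [[|[|j]] Hj] /=; case: i => [i Hi] /=; rewrite ?inordK /=; try lia.
all: repeat case: ifP => /=; move=> *; try (exfalso; lia).
- have -> : i = 0%N by lia.
  have -> : (0 - 0%N).+1 = 1%N by lia.
  have -> : (p - 0).+1 = p.+1 by lia.
  have -> : (p.-1 - 0).+1 = p by lia.
  rewrite (FLseqSS _ k a b p) eqxx; rewrite /= ?mulr1n ?mulr0n; ring.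
- have -> : (p.+1 + 0 - i).+1 = (p.-1 - i).+3 by lia.
  have -> : (p - i).+1 = (p.-1 - i).+2 by lia.
  have -> : (i == 0%N) = false by apply/negbTE; lia.
  rewrite (FLseqSS _ k a b (p.-1 - i).+1); rewrite /= ?mulr1n ?mulr0n; ring.
- have -> : i = p by lia.
  have -> : (p.+1 + 0 - p).+1 = 2%N by lia.
  have -> : (p - p).+1 = 1%N by lia.
  have -> : (p.+1 + p.-1 - p).+1 = p.+1 by lia.
  have -> : (p == 0%N) = false by apply/negbTE; lia.
  rewrite (FLseqSS _ k a b 0%N) /=; rewrite /= ?mulr1n ?mulr0n; ring.
- have -> : i = 0%N by lia.
  have -> : (1 - 0).+1 = 2%N by lia.
  have -> : (0 - 0).+1 = 1%N by lia.
  have -> : (p - 0).+1 = p.+1 by lia.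
  rewrite (FLseqSS _ k a b 0%N) /=; rewrite /= ?mulr1n ?mulr0n; ring.
- have -> : i = 1%N by lia.
  have -> : (1 - 1).+1 = 1%N by lia.
  have -> : (p.+1 + 0 - 1).+1 = p.+1 by lia.
  have -> : (p - 1).+1 = p by lia.
  rewrite (FLseqSS _ k a b p) /=; rewrite /= ?mulr1n ?mulr0n; ring.
- have -> : (p.+1 + 1 - i).+1 = (p - i).+3 by lia.
  have -> : (p.+1 + 0 - i).+1 = (p - i).+2 by lia.
  have -> : (i == 1%N) = false by apply/negbTE; lia.
  rewrite (FLseqSS _ k a b (p - i).+1); rewrite /= ?mulr1n ?mulr0n; ring.
- have -> : (j.+2 - i).+1 = (j - i).+3 by lia.
  have -> : (j.+1 - i).+1 = (j - i).+2 by lia.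
  have -> : (i == j.+2) = false by apply/negbTE; lia.
  rewrite (FLseqSS _ k a b (j - i).+1); rewrite /= ?mulr1n ?mulr0n; ring.
- have -> : i = j.+1 by lia.
  have -> : (j.+2 - j.+1).+1 = 2%N by lia.
  have -> : (j.+1 - j.+1).+1 = 1%N by lia.
  have -> : (p.+1 + j - j.+1).+1 = p.+1 by lia.
  have -> : (j.+1 == j.+2) = false by apply/negbTE; lia.
  rewrite (FLseqSS _ k a b 0%N) /=; rewrite /= ?mulr1n ?mulr0n; ring.
- have -> : i = j.+2 by lia.
  have -> : (j.+2 - j.+2).+1 = 1%N by lia.
  have -> : (p.+1 + j.+1 - j.+2).+1 = p.+1 by lia.
  have -> : (p.+1 + j - j.+2).+1 = p by lia.
  rewrite eqxx (FLseqSS _ k a b p) /=; rewrite /= ?mulr1n ?mulr0n; ring.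
- have -> : (p.+1 + j.+2 - i).+1 = (p.+1 + j - i).+3 by lia.
  have -> : (p.+1 + j.+1 - i).+1 = (p.+1 + j - i).+2 by lia.
  have -> : (i == j.+2) = false by apply/negbTE; lia.
  rewrite (FLseqSS _ k a b (p.+1 + j - i).+1); rewrite /= ?mulr1n ?mulr0n; ring.
Qed.


Lemma odd_pow_m1 (R : realDomainType) (r : R) n : odd n -> r ^+ n = -1 -> r = -1.
Proof.
move=> Hn Hr.
have Hy : (- r) ^+ n = 1.
  by rewrite exprNn -signr_odd Hn Hr expr1 mulrNN mul1r.
have [Hlt|Hge] := ltP (- r) 0.
  by move: (exprn_odd_lt0 (-r) Hn); rewrite Hy Hlt ltr10.
move/eqP: Hy; rewrite pexpr_eq1 //; last exact: odd_gt0.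
by move/eqP => H; rewrite -[r]opprK H.
Qed.

Lemma kerJ_eq (R : fieldType) p (c d : R) (u : 'rV[R]_p.+1) (j : 'I_p.+1) :
  u *m (c%:M + d *: Jm R p) = 0 ->
  c * u 0 j + d * (if (j == 0 :> nat) then - u 0 ord_max else u 0 (inord j.-1)) = 0.
Proof.
rewrite mulmxDr mul_mx_scalar -scalemxAr => /matrixP /(_ 0 j).
by rewrite [LHS]mxE [in X in X + _]mxE [in X in _ + X]mxE shift_col mxE.
Qed.

Lemma kerJ_geom (R : fieldType) p (c d : R) (u : 'rV[R]_p.+1) :
  c != 0 -> u *m (c%:M + d *: Jm R p) = 0 ->
  forall m, (m < p.+1)%N -> u 0 (inord m) = (- d / c) ^+ m * u 0 ord0.
Proof.
move=> c0 H; elim=> [|m IH] Hm.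
  by rewrite expr0 mul1r; congr (u 0 _); apply/val_inj; rewrite /= inordK.
have E := @kerJ_eq _ _ _ _ _ (inord m.+1) H; rewrite inordK //= in E.
rewrite exprS -mulrA -IH; last lia.
apply: (mulfI c0); transitivity (- d * u 0 (inord m)).
  by apply/eqP; rewrite -subr_eq0 mulNr opprK E.
by field.
Qed.

Lemma inord_val (p : nat) (j : 'I_p.+1) : inord (nat_of_ord j) = j.
Proof. by apply/val_inj; rewrite /= inordK. Qed.

Lemma kerJ_zero (R : realFieldType) p (c d : R) (u : 'rV[R]_p.+1) :
  ~~ odd p -> c != d -> u *m (c%:M + d *: Jm R p) = 0 -> u = 0.
Proof.
move=> Hp cd H; apply/rowP => j; rewrite [RHS]mxE.
have [c0|c0] := eqVneq c 0.
  have d0 : d != 0 by rewrite -c0 eq_sym.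
  have [Hj|Hj] := eqVneq (nat_of_ord j) p.
    have := @kerJ_eq _ _ _ _ _ ord0 H; rewrite c0 mul0r add0r /=.
    have -> : j = ord_max by apply/val_inj.
    by move/eqP; rewrite mulf_eq0 (negbTE d0) /= oppr_eq0 => /eqP.
  have Hj1 : (j.+1 < p.+1)%N by have := ltn_ord j; lia.
  have := @kerJ_eq _ _ _ _ _ (inord j.+1) H; rewrite c0 mul0r add0r inordK //= inord_val.
  by move/eqP; rewrite mulf_eq0 (negbTE d0) /= => /eqP.
have G := @kerJ_geom _ _ _ _ _ c0 H.
suff u00 : u 0 ord0 = 0.
  by rewrite -(@inord_val p j) G // u00 mulr0.
have E := @kerJ_eq _ _ _ _ _ ord0 H; rewrite /= in E.
have Hmax : u 0 ord_max = (- d / c) ^+ p * u 0 ord0.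
  by rewrite -G //; congr (u 0 _); apply/val_inj; rewrite /= inordK.
rewrite Hmax in E.
have [Hz|Hz] := eqVneq (c - d * (- d / c) ^+ p) 0; last first.
  apply/eqP; move: Hz; apply: contraR => Hu.
  apply/eqP; apply: (mulIf Hu); rewrite mul0r mulrBl -mulrA -E; ring.
exfalso; move/eqP: cd; apply.
have Hr : (- d / c) ^+ p.+1 = -1.
  move/eqP: Hz; rewrite subr_eq0 => /eqP Hz.
  rewrite exprS; transitivity (- (d * (-d/c)^+p) / c); first by field.
  by rewrite -Hz mulNr divff.
have Ho : odd p.+1 by rewrite /= Hp.
have Hr1 := @odd_pow_m1 _ _ p.+1 Ho Hr.
apply/eqP; rewrite eq_sym -subr_eq0; apply/eqP.
apply: (mulIf (invr_neq0 c0)); rewrite mul0r mulrBl divff //.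
by move: Hr1; rewrite mulNr => /eqP; rewrite eqr_opp => /eqP ->; rewrite subrr.
Qed.


Definition altv (R : nzRingType) p : 'rV[R]_p.+1 := \row_j ((-1) ^+ (nat_of_ord j)).

Lemma altvJ (R : nzRingType) p : ~~ odd p -> altv R p *m Jm R p = - altv R p.
Proof.
move=> Hp; apply/rowP => j; rewrite shift_col !mxE.
case: j => [[|m] Hm] /=.
  by rewrite -signr_odd (negbTE Hp) expr0.
rewrite inordK; last lia.
by rewrite exprS mulN1r opprK.
Qed.

Lemma altv_neq0 (R : nzRingType) p : altv R p != 0.
Proof.
apply/negP => /eqP /rowP /(_ ord0); rewrite !mxE /= expr0 => /eqP.
by rewrite oner_eq0.
Qed.

Lemma kerJ_alt (R : fieldType) p (c : R) (u : 'rV[R]_p.+1) :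
  c != 0 -> u *m (c%:M + c *: Jm R p) = 0 -> (u <= altv R p)%MS.
Proof.
move=> c0 H; apply/sub_rVP; exists (u 0 ord0); apply/rowP => j.
rewrite !mxE -(@inord_val p j) (@kerJ_geom _ _ _ _ _ c0 H) // inordK //.
by rewrite mulNr divff // mulrC.
Qed.

Lemma FLmx_M (R : comNzRingType) p (k a b : R) :
  let A := FLmx p.+1 k a b in
  A - k *: (A *m Jm R p) - (A *m Jm R p) *m Jm R p =
  A *m (1%:M - k *: Jm R p - Jm R p *m Jm R p).
Proof. by move=> A; rewrite !mulmxBr mulmx1 scalemxAr mulmxA. Qed.

Lemma FLdet0 (R : fieldType) p (k a b : R) : (0 < p)%N -> ~~ odd p -> k != 0 ->
  FLseq k a b 1 + FLseq k a b p.+2 = FLseq k a b 0 + FLseq k a b p.+1 ->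
  \det (FLmx p.+1 k a b) = 0.
Proof.
move=> p0 Hp k0 Hcd; apply/eqP/det0P; exists (altv R p); first exact: altv_neq0.
set A := FLmx p.+1 k a b; set v := altv R p.
have HB := @FLmx_B R p k a b p0; rewrite -/A -Hcd in HB.
have xJ : v *m A *m Jm R p = - (v *m A).
  by rewrite -mulmxA FLmx_comm mulmxA altvJ // mulNmx.
have : v *m (A - k *: (A *m Jm R p) - (A *m Jm R p) *m Jm R p) = k *: (v *m A).
  rewrite !mulmxBr -scalemxAr !mulmxA xJ mulNmx xJ opprK scalerN opprK.
  by rewrite addrAC subrr add0r.
rewrite HB mulmxDr mul_mx_scalar -scalemxAr altvJ // scalerN subrr.
move/esym/eqP; rewrite scaler_eq0 (negbTE k0) /= => /eqP //.
Qed.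

Lemma FLrank_c0 (R : fieldType) p (k a b : R) : (0 < p)%N ->
  FLseq k a b 1 + FLseq k a b p.+2 = FLseq k a b 0 + FLseq k a b p.+1 ->
  (\rank (FLmx p.+1 k a b) <= p.-1)%N ->
  FLseq k a b 1 + FLseq k a b p.+2 = 0.
Proof.
move=> p0 Hcd Hr; apply/eqP/negPn/negP => c0.
have HB := @FLmx_B R p k a b p0; have HM := @FLmx_M R p k a b; cbv zeta in HB; cbv zeta in HM; rewrite -Hcd HM in HB.
move: HB Hr; set A := FLmx p.+1 k a b; set M := (1%:M - _ - _) => HB Hr.
have HrB : (\rank (A *m M) <= p.-1)%N by apply: leq_trans (mxrankM_maxl _ _) Hr.
have Hk := mxrank_ker (A *m M).
have Hsub : (kermx (A *m M) <= altv R p)%MS.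
  apply/row_subP => i; apply: (@kerJ_alt _ _ _ _ c0); rewrite -HB -row_mul mulmx_ker.
  by apply/rowP => j; rewrite !mxE.
have := mxrankS Hsub; rewrite Hk.
have := rank_leq_row (altv R p); lia.
Qed.


Lemma evalZ_rec (R : comNzRingType) (p q : {poly int}) (x : R) :
  evalZ ('X * p + q) x = x * evalZ p x + evalZ q x.
Proof. by rewrite /evalZ rmorphD rmorphM /= map_polyX hornerD hornerM hornerX. Qed.

Lemma fe0 (R : comNzRingType) (x : R) : evalZ (fpoly 0) x = 0.
Proof. by rewrite /evalZ /fpoly /= rmorph0 horner0. Qed.
Lemma fe1 (R : comNzRingType) (x : R) : evalZ (fpoly 1) x = 1.
Proof. by rewrite /evalZ /fpoly /= rmorph1 hornerC. Qed.
Lemma ge0 (R : comNzRingType) (x : R) : evalZ (gpoly 0) x = 2.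
Proof. by rewrite /evalZ /gpoly /= map_polyC hornerC. Qed.
Lemma ge1 (R : comNzRingType) (x : R) : evalZ (gpoly 1) x = x.
Proof. by rewrite /evalZ /gpoly /= map_polyX hornerX. Qed.
Lemma feSS (R : comNzRingType) (x : R) m :
  evalZ (fpoly m.+2) x = x * evalZ (fpoly m.+1) x + evalZ (fpoly m) x.
Proof. by rewrite -evalZ_rec. Qed.
Lemma geSS (R : comNzRingType) (x : R) m :
  evalZ (gpoly m.+2) x = x * evalZ (gpoly m.+1) x + evalZ (gpoly m) x.
Proof. by rewrite -evalZ_rec. Qed.

Lemma FLseq_fg (R : comNzRingType) (k a b : R) m :
  FLseq k a b m = b * evalZ (gpoly m) k + a * evalZ (fpoly m) k.
Proof.
suff : FLseq k a b m = b * evalZ (gpoly m) k + a * evalZ (fpoly m) k /\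
       FLseq k a b m.+1 = b * evalZ (gpoly m.+1) k + a * evalZ (fpoly m.+1) k by case.
elim: m => [|m [IH1 IH2]].
  by rewrite fe0 ge0 fe1 ge1 /FLseq /=; split; ring.
split => //.
have -> : FLseq k a b m.+2 = k * FLseq k a b m.+1 + FLseq k a b m by [].
by rewrite IH1 IH2 feSS geSS; ring.
Qed.

Lemma fg_id1 (R : comNzRingType) (x : R) m :
  2 * evalZ (fpoly m.+1) x - x * evalZ (fpoly m) x = evalZ (gpoly m) x.
Proof.
suff : 2 * evalZ (fpoly m.+1) x - x * evalZ (fpoly m) x = evalZ (gpoly m) x /\
       2 * evalZ (fpoly m.+2) x - x * evalZ (fpoly m.+1) x = evalZ (gpoly m.+1) x by case.
elim: m => [|m [IH1 IH2]].
  by rewrite feSS fe0 ge0 fe1 ge1; split; ring.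
split => //.
rewrite feSS geSS -IH1 -IH2 feSS; ring.
Qed.

Lemma fg_id2 (R : comNzRingType) (x : R) m :
  evalZ (gpoly m) x * evalZ (fpoly m.+1) x - evalZ (gpoly m.+1) x * evalZ (fpoly m) x
  = 2 * (-1) ^+ m.
Proof.
elim: m => [|m IH].
  by rewrite fe0 ge0 fe1 ge1 expr0; ring.
rewrite feSS geSS exprS mulrCA -IH; ring.
Qed.

Lemma fg_at0 (R : comNzRingType) m :
  evalZ (fpoly m) (0 : R) = (odd m)%:R /\ evalZ (gpoly m) (0 : R) = (~~ odd m)%:R * 2.
Proof.
suff : (evalZ (fpoly m) (0 : R) = (odd m)%:R /\ evalZ (gpoly m) (0 : R) = (~~ odd m)%:R * 2) /\
  (evalZ (fpoly m.+1) (0 : R) = (odd m.+1)%:R /\ evalZ (gpoly m.+1) (0 : R) = (~~ odd m.+1)%:R * 2)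
  by case.
elim: m => [|m [IH1 IH2]].
  by rewrite fe0 ge0 fe1 ge1 /= mul1r mul0r.
split => //.
case: IH1 => H1 H2.
by rewrite feSS geSS H1 H2 !mul0r !add0r /= negbK.
Qed.

Lemma g_at1_pos (R : realDomainType) m : 1 <= evalZ (gpoly m) (1 : R).
Proof.
suff : 1 <= evalZ (gpoly m) (1 : R) /\ 1 <= evalZ (gpoly m.+1) (1 : R) by case.
elim: m => [|m [IH1 IH2]].
  by rewrite ge0 ge1 lexx; split => //; rewrite ler1n.
split => //.
rewrite geSS mul1r; apply: le_trans IH2 _.
rewrite lerDl; apply: le_trans IH1; exact: ler01.
Qed.

Lemma poly_roots_fin (R : idomainType) (q : {poly R}) :
  q != 0 -> exists s : seq R, forall x, root q x -> x \in s.
Proof.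
move: {2}(size q) (leqnn (size q)) => n; elim: n q => [|n IH] q Hs q0.
  by move: q0; rewrite -size_poly_eq0; lia.
case: (Classical_Prop.classic (exists x, root q x)) => [[x Hx]|Hno]; last first.
  by exists [::] => y Hy; exfalso; apply: Hno; exists y.
case/factor_theorem: Hx => r Hr.
have r0 : r != 0 by apply/eqP => r0; move: q0; rewrite Hr r0 mul0r eqxx.
have Hsr : (size r <= n)%N.
  by move: Hs; rewrite Hr size_Mmonic ?monicXsubC // ?size_XsubC addn2.
have [s Hsx] := IH r Hsr r0.
exists (x :: s) => y; rewrite Hr rootM root_XsubC in_cons => /orP [/Hsx ->|->];
  by rewrite ?orbT.
Qed.


Lemma evalZ_sub (R : comNzRingType) (p q : {poly int}) (x : R) :
  evalZ (p - q) x = evalZ p x - evalZ q x.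
Proof. by by rewrite /evalZ rmorphB /= hornerD hornerN. Qed.

Lemma FL_lin (R : comNzRingType) p (k a b : R) :
  FLseq k a b 1 + FLseq k a b p.+2 - (FLseq k a b 0 + FLseq k a b p.+1) =
  a * (evalZ (Fpoly p.+1) k + 1) + b * (evalZ (Gpoly p.+1) k + k - 2).
Proof.
rewrite /Fpoly /Gpoly !evalZ_sub !FLseq_fg fe0 fe1 ge0 ge1; ring.
Qed.

Lemma rank_det (R : fieldType) p (A : 'M[R]_p.+1) :
  (\rank A <= p)%N = (\det A == 0).
Proof.
have := rank_leq_row A.
have -> : (\det A == 0) = ~~ row_free A by rewrite row_free_unit unitmxE unitfE negbK.
rewrite /row_free; case: (ltngtP (\rank A) p.+1) => H; lia.
Qed.

Lemma rank_lin (R : realFieldType) p (k a b : R) : (0 < p)%N -> ~~ odd p -> k != 0 ->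
  (\rank (FLmx p.+1 k a b) <= p)%N <->
  a * (evalZ (Fpoly p.+1) k + 1) + b * (evalZ (Gpoly p.+1) k + k - 2) = 0.
Proof.
move=> p0 Hp k0; rewrite rank_det -FL_lin; split.
  case/det0P => u u0 Hu; apply/eqP; rewrite subr_eq0; apply/negPn/negP => cd; move/eqP: u0; apply.
  apply: (@kerJ_zero _ _ _ _ _ Hp cd).
  have HB := @FLmx_B R p k a b p0; have HM := @FLmx_M R p k a b.
  cbv zeta in HB; cbv zeta in HM.
  by rewrite -HB HM mulmxA Hu mul0mx.
by move/eqP; rewrite subr_eq0 => /eqP H; apply/eqP; apply: FLdet0.
Qed.

Lemma inA0 (R : comNzRingType) p : ~~ odd p -> inA p.+1 (0 : R).
Proof.
move=> Hp; rewrite /inA /Fpoly evalZ_sub.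
have [f1 _] := @fg_at0 R p.+2; have [f0 _] := @fg_at0 R p.+1.
rewrite f1 f0 /= (negbTE Hp) /=; apply/orP; left; apply/eqP; ring.
Qed.

Lemma partA (R : realFieldType) p (k a b : R) : (0 < p)%N -> ~~ odd p ->
  inS p.+1 p k a b <->
  exists2 k' : R, ~~ inA p.+1 k' & (k, a, b) = (k', aT1 p.+1 k', bT1 p.+1 k').
Proof.
move=> p0 Hp; split.
  case=> nA k0 Hr Hs Hnz; exists k => //.
  have := (@rank_lin _ p k a b p0 Hp k0).1 Hr.
  move: nA; rewrite /inA /aT1 /bT1.
  set X := evalZ (Fpoly p.+1) k + 1; set Y := evalZ (Gpoly p.+1) k + k - 2.
  rewrite negb_or => /andP [X0 Y0] Hl.
  have hb : b = - a * X / Y.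
    apply: (mulIf Y0); rewrite divfK //; apply/eqP.
    by rewrite -subr_eq0 mulNr opprK addrC Hl.
  have a0 : a != 0.
    apply/eqP => a0; apply: Hnz; split => //; by rewrite hb a0 oppr0 !mul0r.
  have : a ^+ 2 * (4 * a * Y ^+ 2 + 27 * X ^+ 2) = 0.
    transitivity ((4 * a ^+ 3 + 27 * b ^+ 2) * Y ^+ 2); last by rewrite Hs mul0r.
    rewrite hb; field; exact: Y0.
  move/eqP; rewrite mulf_eq0 expf_eq0 (negbTE a0) /= => /eqP Ha.
  have ha : a = - (27 * X ^+ 2) / (4 * Y ^+ 2).
    have Y2 : 4 * Y ^+ 2 != 0 by rewrite mulf_neq0 ?expf_neq0 // pnatr_eq0.
    apply: (mulIf Y2); rewrite divfK //.
    apply/eqP; rewrite -subr_eq0 opprK; apply/eqP; rewrite -Ha; ring.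
  have hb' : b = 27 * X ^+ 3 / (4 * Y ^+ 3).
    rewrite hb ha; field.
    by rewrite ?Y0.
  by rewrite -ha -hb'.
case=> k' nA [-> -> ->]; split => //.
- by apply: contra nA => /eqP ->; apply: inA0.
- have k0 : k' != 0 by apply: contra nA => /eqP ->; apply: inA0.
  apply/(@rank_lin _ p k' _ _ p0 Hp k0).
  move: nA; rewrite /inA /aT1 /bT1.
  set X := evalZ (Fpoly p.+1) k' + 1; set Y := evalZ (Gpoly p.+1) k' + k' - 2.
  rewrite negb_or => /andP [X0 Y0].
  field; by rewrite ?Y0 ?X0.
- move: nA; rewrite /inA /aT1 /bT1.
  set X := evalZ (Fpoly p.+1) k' + 1; set Y := evalZ (Gpoly p.+1) k' + k' - 2.
  rewrite negb_or => /andP [X0 Y0].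
  field; by rewrite ?Y0 ?X0.
- move: nA; rewrite /inA /aT1.
  set X := evalZ (Fpoly p.+1) k' + 1; set Y := evalZ (Gpoly p.+1) k' + k' - 2.
  rewrite negb_or => /andP [X0 Y0] [/eqP + _].
  rewrite mulf_eq0 invr_eq0 oppr_eq0 !mulf_eq0 ?expf_eq0 (negbTE X0) (negbTE Y0) ?andbF !orbF.
  by move/orP => [] /eqP; lra.
Qed.

Lemma partB (R : realFieldType) p : (0 < p)%N -> ~~ odd p ->
  exists s : seq (R * R * R), forall k a b : R,
    inS p.+1 p k a b -> (\rank (FLmx p.+1 k a b) <= p.-1)%N -> (k, a, b) \in s.
Proof.
move=> p0 Hp.
have gq : map_poly intr (gpoly p.+1) != 0 :> {poly R}.
  apply/eqP => H; have := @g_at1_pos R p.+1; rewrite /evalZ H horner0; lra.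
have [sg Hsg] := @poly_roots_fin _ _ gq.
exists (map (fun k => (k, aT1 p.+1 k, bT1 p.+1 k)) sg).
move=> k a b HS Hr.
have [k' _ E] := (@partA R p k a b p0 Hp).1 HS.
case: HS => _ k0 Hr0 _ Hnz.
have Hl := (@rank_lin R p k a b p0 Hp k0).1 Hr0.
rewrite -FL_lin in Hl; move/eqP: Hl; rewrite subr_eq0 => /eqP Hcd.
have Hc := @FLrank_c0 R p k a b p0 Hcd Hr.
have Hd : FLseq k a b 0 + FLseq k a b p.+1 = 0 by rewrite -Hcd.
suff Hg : root (map_poly intr (gpoly p.+1)) k.
  by rewrite E; apply: map_f; case: E => <- _ _; apply: Hsg.
rewrite /root -/(evalZ (gpoly p.+1) k).
move: Hc Hd; rewrite !FLseq_fg fe0 fe1 ge0 ge1.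
set gN := evalZ (gpoly p.+1) k; set gN1 := evalZ (gpoly p.+2) k.
set fN := evalZ (fpoly p.+1) k; set fN1 := evalZ (fpoly p.+2) k => Hc Hd.
have HD : (2 + gN) * (1 + fN1) - fN * (k + gN1) = 2 * gN.
  have I1 := @fg_id1 R k p.+1; have I2 := @fg_id2 R k p.+1.
  rewrite -signr_odd /= (negbTE Hp) /= expr1 in I2.
  rewrite -/gN -/gN1 -/fN -/fN1 in I1 I2.
  transitivity (2 + (2 * fN1 - k * fN) + gN + (gN * fN1 - gN1 * fN)); first ring.
  by rewrite I1 I2; ring.
apply/negPn/negP => g0; apply: Hnz.
have D0 : (2 + gN) * (1 + fN1) - fN * (k + gN1) != 0.
  have two0 : (2:R) != 0 by clear E; lra.
  by rewrite HD mulf_neq0.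
split.
  apply: (mulfI D0); rewrite mulr0.
  transitivity ((2 + gN) * (b * k + a * 1 + (b * gN1 + a * fN1))
                - (k + gN1) * (b * 2 + a * 0 + (b * gN + a * fN))); first ring.
  by rewrite Hc Hd; ring.
apply: (mulfI D0); rewrite mulr0.
transitivity ((1 + fN1) * (b * 2 + a * 0 + (b * gN + a * fN))
              - fN * (b * k + a * 1 + (b * gN1 + a * fN1))); first ring.
by rewrite Hc Hd; ring.
Qed.

Theorem theorem4p11 (R : realType) (n : nat) (Hn : (3 <= n)%N) (Hodd : odd n) :
  (* (a) *)
  (forall k a b : R, inS n n.-1 k a b <->
     exists2 k' : R, ~~ inA n k' & (k, a, b) = (k', aT1 n k', bT1 n k'))
  /\
  (* (b) : only finitely many triples of S^{n-1}_n have rank <> n-1 *)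
  (exists s : seq (R * R * R), forall k a b : R,
     inS n n.-1 k a b -> \rank (FLmx n k a b) <> n.-1 -> (k, a, b) \in s)
  /\
  (* (c) *)
  (forall r : nat, (1 <= r <= n - 2)%N ->
     exists s : seq (R * R * R), forall k a b : R,
       inS n n.-1 k a b -> \rank (FLmx n k a b) = r -> (k, a, b) \in s).
Proof.
case: n Hn Hodd => [//|p] Hn Hodd.
have Hp : ~~ odd p by [].
have p0 : (0 < p)%N by lia.
have [s Hs] := @partB R p p0 Hp.
split; [|split].
- by move=> k a b; apply: partA.
- exists s => k a b HS Hr; apply: Hs => //.
  case: (HS) => _ _ Hr0 _ _; move: Hr0 Hr => /=; move: (\rank _) => q; lia.
- move=> r Hr; exists s => k a b HS Hrk; apply: Hs => //.
  by rewrite Hrk; lia.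
Qed.
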